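(* Let $M\in\mathrm{M}_n(\mathbb{K})$ be a cyclic matrix with minimal polynomial $f=f_1^{m_1}\cdots f_s^{m_s}$, where $f_1,\dots,f_s\in\mathbb{K}[x]$ are pairwise distinct monic irreducible separable polynomials and $m_i\ge1$. For $P\in\mathbb{L}[x]$ let $\delta_{\mathbb{L}}(P)$ be the number of monic irreducible divisors of $P$ in $\mathbb{L}[x]$. Let $\mathbb{P}$ be the proportion, among all $M$-cyclic codes $\mathcal{C}\subseteq\mathbb{L}^n$ (including $\{0\}$ and $\mathbb{L}^n$), of those with minimal rank distance different from $1$ (i.e. $\mathcal{C}=\{0\}$ or $M_1(\mathcal{C})\ge2$). Then $$\mathbb{P}=\prod_{i=1}^s\Big(1-\Big(\frac{m_i}{m_i+1}\Big)^{\delta_{\mathbb{L}}(f_i)}\Big),\qquad \prod_{i=1}^s\frac{1}{m_i+1}\le\mathbb{P}\le\prod_{i=1}^s\Big(1-\Big(\frac{m_i}{m_i+1}\Big)^{\deg f_i}\Big).$$ Moreover: (1) $\mathbb{P}=\prod_i\frac1{m_i+1}$ if and only if $f_1,\dots,f_s$ are irreducible in $\mathbb{L}[x]$, if and only if every nonzero $M$-cyclic code has first rank weight $1$; (2) $\mathbb{P}=\prod_i\big(1-(\frac{m_i}{m_i+1})^{\deg f_i}\big)$ if and only if $f$ splits completely into linear factors in $\mathbb{L}[x]$.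
   Context: Let $\mathbb{L}/\mathbb{K}$ be a field extension of finite degree $m\ge n$. Vectors are row vectors. For $c=(c_1,\dots,c_n)\in\mathbb{L}^n$, $\mathrm{wt}_R(c)=\dim_{\mathbb{K}}\mathrm{Span}_{\mathbb{K}}(c_1,\dots,c_n)$, and for a nonzero linear code $\mathcal{C}\subseteq\mathbb{L}^n$ (an $\mathbb{L}$-subspace), $M_1(\mathcal{C})=\min\{\mathrm{wt}_R(c):0\neq c\in\mathcal{C}\}$. A matrix $M\in\mathrm{M}_n(\mathbb{K})$ is cyclic if there is $v\in\mathbb{K}^n$ with $(v,vM^t,\dots,v(M^t)^{n-1})$ a basis of $\mathbb{K}^n$. An $M$-cyclic code is an $\mathbb{L}$-subspace $\mathcal{C}\subseteq\mathbb{L}^n$ with $cM^t\in\mathcal{C}$ for all $c\in\mathcal{C}$, where $M$ is cyclic; these are in bijection with the monic divisors of $f$ in $\mathbb{L}[x]$. *)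

(* Defs.v *)
From HB Require Import structures.
From mathcomp Require Import all_boot all_order all_algebra all_field.
From mathcomp Require Import boolp.
Set Implicit Arguments. Unset Strict Implicit. Unset Printing Implicit Defensive.
Import GRing.Theory.
Local Open Scope ring_scope.

Definition wtR (K : fieldType) (L : fieldExtType K) (n : nat) (c : 'rV[L]_n) : nat :=
  \dim (<<[seq c ord0 i | i <- enum 'I_n]>>%VS : {vspace L}).

Definition has_weight (K : fieldType) (L : fieldExtType K) (n : nat)
  (C : {vspace 'rV[L]_n}) : pred nat :=
  fun k => `[< exists2 c, c \in C & (c != 0) && (wtR c == k) >].

(* M_1(C) = min { wt_R(c) : 0 <> c in C }  (set to 0 when C = {0}) *)
Definition M1 (K : fieldType) (L : fieldExtType K) (n : nat)
  (C : {vspace 'rV[L]_n}) : nat :=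
  match pselect (exists k, has_weight C k) with
  | left H => ex_minn H
  | right _ => 0%N
  end.

Definition cyclic_mx (K : fieldType) (n : nat) (M : 'M[K]_n) : Prop :=
  exists v : 'rV[K]_n, row_free (\matrix_(i < n) (v *m (M^T) ^+ i)).

Definition Mcyclic_code (K : fieldType) (L : fieldExtType K) (n : nat)
  (M : 'M[K]_n) (C : {vspace 'rV[L]_n}) : Prop :=
  forall c, c \in C -> c *m (map_mx (in_alg L) M)^T \in C.

Definition is_delta (L : fieldType) (p : {poly L}) (d : nat) : Prop :=
  exists s : seq {poly L}, [/\ uniq s,
    (forall q, q \in s <-> [/\ q \is monic, irreducible_poly q & q %| p])
    & size s = d].

(* Main.v *)
Require Import Defs.
From HB Require Import structures.
From mathcomp Require Import all_boot all_order all_algebra all_field.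
From mathcomp Require Import boolp zify ring.
Set Implicit Arguments. Unset Strict Implicit. Unset Printing Implicit Defensive.
Import GRing.Theory.
Local Open Scope ring_scope.

Section PolyF.
Variable F : fieldType.
Implicit Types p q g h a b : {poly F}.

Lemma irr_coprime g h : irreducible_poly g -> ~~ (g %| h) -> coprimep g h.
Proof.
move=> irr ngh; rewrite coprimep_def.
case: (irredp_XsubCP irr (dvdp_gcdl g h)) => e.
  by rewrite (eqp_size e) size_poly1.
by move: ngh; rewrite -(eqp_dvdl _ e) dvdp_gcdr.
Qed.

Lemma irr_dvd_prod (I : eqType) (r : seq I) (P : I -> {poly F}) g :
  irreducible_poly g -> g %| \prod_(i <- r) P i -> exists2 i, i \in r & g %| P i.
Proof.
move=> irr; elim: r => [|i r IH]; rewrite ?big_nil ?big_cons.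
  by rewrite dvdp1 => /eqP s1; move: irr.1; rewrite s1.
have [gi _|ngi] := boolP (g %| P i); first by exists i; rewrite ?mem_head.
rewrite Gauss_dvdpr ?irr_coprime // => /IH [j jr gj].
by exists j; rewrite // in_cons jr orbT.
Qed.

Lemma irr_size1 g h : irreducible_poly g -> coprimep g h -> h %| g -> size h = 1%N.
Proof.
move=> irr cgh hg; have: h %| gcdp g h by rewrite dvdp_gcd hg dvdpp.
move: cgh; rewrite coprimep_def => /eqP gs1 hgcd.
have gcd0 : gcdp g h != 0 by rewrite -size_poly_eq0 gs1.
have := dvdp_leq gcd0 hgcd; rewrite gs1.
have h0 : h != 0 by apply: contraNneq (irredp_neq0 irr) => h0; move: hg; rewrite h0 dvd0p.
by rewrite leq_eqVlt ltnS leqn0 size_poly_eq0 (negPf h0) orbF => /eqP.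
Qed.

Lemma pp_step g : irreducible_poly g -> forall e h,
  h %| g ^+ e.+1 -> ~~ (g ^+ e.+1 %| h) -> h %| g ^+ e.
Proof.
move=> irr; elim=> [|e IH] h.
- rewrite expr1 expr0 => hg ngh.
  have [gh|ngh'] := boolP (g %| h); first by rewrite gh in ngh.
  rewrite dvdp1; apply/eqP; apply: (irr_size1 irr _ hg).
  exact: irr_coprime irr ngh'.
- move=> hg ngh.
  have [gh|ngh'] := boolP (g %| h).
    have g0 : g != 0 by exact: irredp_neq0.
    have Dh := divpK gh; rewrite -Dh exprSr dvdp_mul2r // in hg.
    have nn : ~~ (g ^+ e.+1 %| h %/ g).
      by apply: contra ngh => H; rewrite -Dh exprSr dvdp_mul2r.
    by rewrite -Dh exprSr dvdp_mul2r // IH.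
  have c : coprimep h (g ^+ e.+2).
    by rewrite coprimep_sym coprimep_expl // irr_coprime.
  have: size h = 1%N.
    have: h %| gcdp h (g ^+ e.+2) by rewrite dvdp_gcd dvdpp hg.
    move: c; rewrite coprimep_def => /eqP gs1 hgcd.
    have gcd0 : gcdp h (g ^+ e.+2) != 0 by rewrite -size_poly_eq0 gs1.
    have := dvdp_leq gcd0 hgcd; rewrite gs1.
    have h0 : h != 0.
      by apply: contraNneq ngh => ->; rewrite dvdp0.
    by rewrite leq_eqVlt ltnS leqn0 size_poly_eq0 (negPf h0) orbF => /eqP.
  move=> sh1; apply: dvdp_trans (dvd1p (g ^+ e.+1)).
  by rewrite dvdp1 sh1.
Qed.

Definition isDv q (s : seq {poly F}) :=
  uniq s /\ forall h, (h \in s) = (h \is monic) && (h %| q).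

Lemma monic_size1 h : h \is monic -> size h = 1%N -> h = 1.
Proof.
move=> mh sh; have := size1_polyC (eq_leq sh) => Dh.
by move: mh; rewrite Dh monicE lead_coefC => /eqP ->.
Qed.

Lemma pow_div g e h : irreducible_poly g -> g \is monic -> h \is monic ->
  h %| g ^+ e -> exists2 k, (k <= e)%N & h = g ^+ k.
Proof.
move=> irr mg; elim: e => [|e IH] mh.
  rewrite expr0 dvdp1 => /eqP s1; exists 0%N => //.
  by rewrite expr0 (monic_size1 mh s1).
move=> hg; have [gh|ngh] := boolP (g ^+ e.+1 %| h).
  exists e.+1 => //; apply/eqP; rewrite -eqp_monic ?monic_exp //.
  by rewrite /eqp hg gh.
have [k ke ->] := IH mh (pp_step irr hg ngh).
by exists k => //; rewrite (leq_trans ke).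
Qed.

Lemma Dv_pow g e : irreducible_poly g -> g \is monic ->
  isDv (g ^+ e) (mkseq (fun k => g ^+ k) e.+1).
Proof.
move=> irr mg; split.
  apply: mkseq_uniq => k l ekl.
  have g0 : g != 0 by exact: irredp_neq0.
  have := size_exp g k; rewrite ekl size_exp => /eqP.
  rewrite eqn_mul2l; case/orP => [/eqP|/eqP //].
  by have := irr.1; case: (size g) => [|[|]].
move=> h; apply/idP/idP.
  case/mapP => k; rewrite mem_iota add0n => /andP[_ ke] ->.
  by rewrite monic_exp // dvdp_exp2l.
case/andP => mh hd; have [k ke ->] := pow_div irr mg mh hd.
by apply/mapP; exists k => //; rewrite mem_iota.
Qed.

Lemma Dv_mul a b sa sb : coprimep a b -> isDv a sa -> isDv b sb ->
  isDv (a * b) [seq x * y | x <- sa, y <- sb].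
Proof.
move=> cab [ua Ha] [ub Hb]; split.
  apply: allpairs_uniq => // -[x1 y1] [x2 y2] /allpairsPdep [x1' [y1' [xs1 ys1 [-> ->]]]].
  move=> /allpairsPdep [x2' [y2' [xs2 ys2 [-> ->]]]] /= E.
  move: xs1 ys1 xs2 ys2; rewrite Ha Hb Ha Hb => /andP[m1 d1] /andP[n1 e1] /andP[m2 d2] /andP[n2 e2].
  have c12 : coprimep x1' y2'.
    by apply: (coprimep_dvdr d1); apply: (coprimep_dvdl e2).
  have c21 : coprimep x2' y1'.
    by apply: (coprimep_dvdr d2); apply: (coprimep_dvdl e1).
  have x12 : x1' %| x2'.
    by rewrite -(Gauss_dvdpl _ c12) -E dvdp_mulr.
  have x21 : x2' %| x1'.
    by rewrite -(Gauss_dvdpl _ c21) E dvdp_mulr.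
  have ex : x1' = x2' by apply/eqP; rewrite -eqp_monic // /eqp x12 x21.
  rewrite -ex in E *; congr (_, _); apply: (mulfI (monic_neq0 m1)) E.
move=> h; apply/idP/idP.
  case/allpairsPdep => x [y [xs ys ->]].
  move: xs ys; rewrite Ha Hb => /andP[mx dx] /andP[my dy].
  by rewrite monicMl // my dvdp_mul.
case/andP => mh hab.
set x0 := gcdp h a; set y0 := gcdp h b.
have x00 : x0 != 0 by rewrite gcdp_eq0 negb_and monic_neq0.
have y00 : y0 != 0 by rewrite gcdp_eq0 negb_and monic_neq0.
set x := (lead_coef x0)^-1 *: x0; set y := (lead_coef y0)^-1 *: y0.
have ex : x %= x0 by rewrite eqp_scale // invr_eq0 lead_coef_eq0.
have ey : y %= y0 by rewrite eqp_scale // invr_eq0 lead_coef_eq0.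
have mx : x \is monic by rewrite monicE lead_coefZ mulVf ?lead_coef_eq0.
have my : y \is monic by rewrite monicE lead_coefZ mulVf ?lead_coef_eq0.
have cxy : coprimep x0 y0.
  by apply: (coprimep_dvdr (dvdp_gcdr _ _)); apply: (coprimep_dvdl (dvdp_gcdr _ _)).
have hx : h %| x0 * b.
  have : h %| gcdp (a * b) (h * b) by rewrite dvdp_gcd hab dvdp_mulr.
  move/dvdp_trans; apply; rewrite -(eqp_dvdl _ (mulp_gcdl _ _ _)).
  by apply: dvdp_mul => //; rewrite (eqp_dvdl _ (gcdpC _ _)) dvdpp.
have hxy : h %| x0 * y0.
  have : h %| gcdp (x0 * b) (x0 * h) by rewrite dvdp_gcd hx dvdp_mull.
  move/dvdp_trans; apply; rewrite -(eqp_dvdl _ (mulp_gcdr _ _ _)).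
  by apply: dvdp_mul => //; rewrite (eqp_dvdl _ (gcdpC _ _)) dvdpp.
have xyh : x0 * y0 %| h by rewrite Gauss_dvdp // dvdp_gcdl dvdp_gcdl.
have hE : h = x * y.
  apply/eqP; rewrite -eqp_monic // ?monicMl //.
  have e1 : x0 * y0 %= x * y.
    have e2 : x0 * y0 %= x * y0 by rewrite eqp_mul2r // eqp_sym.
    apply: (eqp_trans e2).
    have x0n : x != 0 by exact: monic_neq0.
    by rewrite eqp_mul2l // eqp_sym.
  by apply: eqp_trans e1; rewrite /eqp hxy xyh.
rewrite hE; apply/allpairsPdep; exists x, y; split => //.
  by rewrite Ha mx (eqp_dvdl _ ex) dvdp_gcdr.
by rewrite Hb my (eqp_dvdl _ ey) dvdp_gcdr.
Qed.


Lemma coprime_prodr (I : eqType) (r : seq I) (Q : I -> {poly F}) p :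
  (forall j, j \in r -> coprimep p (Q j)) -> coprimep p (\prod_(j <- r) Q j).
Proof.
elim: r => [|j r IH] H; first by rewrite big_nil coprimep1.
rewrite big_cons coprimepMr H ?mem_head //= IH // => k kr.
by apply: H; rewrite in_cons kr orbT.
Qed.

Lemma prod_monic (I : eqType) (r : seq I) (Q : I -> {poly F}) :
  (forall j, j \in r -> Q j \is monic) -> \prod_(j <- r) Q j \is monic.
Proof.
elim: r => [|j r IH] H; first by rewrite big_nil monic1.
rewrite big_cons monicMl ?H ?mem_head // IH // => k kr.
by apply: H; rewrite in_cons kr orbT.
Qed.

Definition DvL (I : Type) (r : seq I) (S : I -> seq {poly F}) :=
  foldr (fun i acc => [seq x * y | x <- S i, y <- acc]) [:: 1] r.

Lemma Dv1 : isDv 1 [:: 1].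
Proof.
split => // h; rewrite inE; apply/eqP/andP => [->|[mh]]; first by rewrite monic1 dvdpp.
by rewrite dvdp1 => /eqP /(monic_size1 mh).
Qed.

Lemma Dv_prod (I : eqType) (r : seq I) (Q : I -> {poly F}) S :
  uniq r -> (forall i j, i \in r -> j \in r -> i != j -> coprimep (Q i) (Q j)) ->
  (forall i, i \in r -> isDv (Q i) (S i)) -> isDv (\prod_(i <- r) Q i) (DvL r S).
Proof.
elim: r => [|i r IH] /= ur cop HD; first by rewrite big_nil; exact: Dv1.
case/andP: ur => nir ur.
rewrite big_cons; apply: Dv_mul.
- apply: coprime_prodr => j jr; apply: cop; rewrite ?mem_head ?in_cons ?jr ?orbT //.
  by apply: contraNneq nir => ->.
- by apply: HD; rewrite mem_head.
apply: IH => //.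
  by move=> a b ar br; apply: cop; rewrite in_cons ?ar ?br orbT.
by move=> a ar; apply: HD; rewrite in_cons ar orbT.
Qed.

Lemma size_DvL (I : Type) (r : seq I) S :
  size (DvL r S) = (\prod_(i <- r) size (S i))%N.
Proof.
elim: r => [|i r IH]; first by rewrite big_nil.
by rewrite big_cons /= size_allpairs IH.
Qed.

Lemma Dv_size q s1 s2 : isDv q s1 -> isDv q s2 -> size s1 = size s2.
Proof.
move=> [u1 H1] [u2 H2]; apply: perm_size; apply: uniq_perm => // h.
by rewrite H1 H2.
Qed.

Lemma Dv_filter q s d : isDv q s -> d %| q -> isDv d (filter (fun h => h %| d) s).
Proof.
move=> [u H] dq; split; first exact: filter_uniq.
move=> h; rewrite mem_filter H; apply/idP/idP.
  by case/and3P => -> -> _.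
by case/andP => -> hd; rewrite hd (dvdp_trans hd dq).
Qed.

Lemma count_allpairs_mul (s t : seq {poly F}) (P A B : pred {poly F}) :
  (forall x y, x \in s -> y \in t -> P (x * y) = A x && B y) ->
  count P [seq x * y | x <- s, y <- t] = (count A s * count B t)%N.
Proof.
elim: s => [|a s IH] H //=.
rewrite count_cat IH; last by move=> x y xs yt; apply: H; rewrite ?in_cons ?xs ?orbT.
rewrite mulnDl; congr (_ + _)%N; rewrite count_map.
have -> : count (preim ( *%R a) P) t = count (fun y => A a && B y) t.
  by apply: eq_in_count => y yt; rewrite /= H ?mem_head.
by case: (A a) => /=; rewrite ?mul1n ?mul0n ?count_pred0.
Qed.

Lemma count_DvL (I : eqType) (r : seq I) (Q : I -> {poly F}) S (G : I -> pred {poly F}) :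
  uniq r -> (forall i j, i \in r -> j \in r -> i != j -> coprimep (Q i) (Q j)) ->
  (forall i, i \in r -> isDv (Q i) (S i)) ->
  (forall i u v, u %= v -> G i u = G i v) ->
  count (fun h => all (fun i => G i (gcdp h (Q i))) r) (DvL r S) =
  (\prod_(i <- r) count (G i) (S i))%N.
Proof.
move=> + + + GE; elim: r => [|i r IH] /= ur cop HD.
  by rewrite big_nil.
case/andP: ur => nir ur.
have HDi := HD i (mem_head _ _).
have cop' : forall i1 j1, i1 \in r -> j1 \in r -> i1 != j1 -> coprimep (Q i1) (Q j1).
  by move=> a b ar br; apply: cop; rewrite in_cons ?ar ?br orbT.
have HD' : forall i1, i1 \in r -> isDv (Q i1) (S i1).
  by move=> a ar; apply: HD; rewrite in_cons ar orbT.
have HDr := Dv_prod ur cop' HD'.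
rewrite big_cons -IH //; apply: count_allpairs_mul => x y xS yD.
have := xS; rewrite HDi.2 => /andP[mx xq].
have := yD; rewrite HDr.2 => /andP[my yq].
congr andb.
  apply: GE; apply: eqp_trans (gcdpC _ _) _.
  have cy : coprimep (Q i) y.
    apply: (coprimep_dvdl yq); apply: coprime_prodr => j jr; apply: cop.
    - exact: mem_head.
    - by rewrite in_cons jr orbT.
    - by apply: contraNneq nir => ->.
  apply: eqp_trans (Gauss_gcdpl _ cy) _.
  exact: dvdp_gcd_idr.
apply: eq_in_all => j jr /=; apply: GE.
apply: eqp_trans (gcdpC _ _) _; apply: eqp_trans _ (gcdpC _ _).
have cx : coprimep (Q j) x.
  apply: (coprimep_dvdl xq); apply: cop.
  - by rewrite in_cons jr orbT.
  - exact: mem_head.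
  - by apply: contraNneq nir => <-.
exact: Gauss_gcdpr.
Qed.

Lemma factor_exists q : q \is monic -> exists s : seq {poly F},
  (forall g, g \in s -> g \is monic /\ irreducible_poly g) /\ q = \prod_(g <- s) g.
Proof.
have : forall n q, (size q <= n)%N -> q \is monic -> exists s : seq {poly F},
  (forall g, g \in s -> g \is monic /\ irreducible_poly g) /\ q = \prod_(g <- s) g.
  elim=> [|n IH] {}q sq mq.
    by move: (monic_neq0 mq); rewrite -size_poly_eq0; move: sq; rewrite leqn0 => ->.
  have [sq1|sq1] := leqP (size q) 1.
    exists [::]; split => //; rewrite big_nil; apply: monic_size1 => //.
    apply/eqP; rewrite eqn_leq sq1 /= size_poly_gt0; exact: monic_neq0.
  have [irr|nirr] := pselect (irreducible_poly q).
    by exists [:: q]; split; [move=> g; rewrite inE => /eqP ->|rewrite big_seq1].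
  have : ~ (forall d : {poly F}, size d != 1%N -> d %| q -> d %= q) by move=> H; apply: nirr.
  move/existsNP => [d]; move/not_implyP => [sd1]; move/not_implyP => [dq ndq].
  have q0 := monic_neq0 mq.
  have d0 : d != 0 by apply: contraNneq q0 => d0; move: dq; rewrite d0 dvd0p.
  set d' := (lead_coef d)^-1 *: d.
  have ed : d' %= d by rewrite eqp_scale // invr_eq0 lead_coef_eq0.
  have md : d' \is monic by rewrite monicE lead_coefZ mulVf ?lead_coef_eq0.
  have dq' : d' %| q by rewrite (eqp_dvdl _ ed).
  set e := q %/ d'.
  have Dq : q = e * d' by rewrite /e divpK.
  have me : e \is monic by move: mq; rewrite Dq monicMr.
  have sd' : size d' != 1%N by rewrite (eqp_size ed).
  have sdq : (size d' < size q)%N.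
    rewrite ltn_neqAle dvdp_leq // andbT (dvdp_size_eqp dq').
    by apply/negP => H; apply: ndq; apply: (eqp_trans _ H); rewrite eqp_sym.
  have d'0 := monic_neq0 md; have e0 := monic_neq0 me.
  have sd2 : (1 < size d')%N.
    by rewrite ltn_neqAle eq_sym sd' /= size_poly_gt0.
  have se2 : (0 < size e)%N by rewrite size_poly_gt0.
  have szq : size q = (size e + size d').-1 by rewrite Dq size_mul.
  have sdn : (size d' <= n)%N by rewrite -ltnS (leq_trans sdq sq).
  have sen : (size e <= n)%N.
    rewrite -ltnS (leq_trans _ sq) // szq.
    by move: sd2 se2; lia.
  have [s1 [H1 E1]] := IH d' sdn md.
  have [s2 [H2 E2]] := IH e sen me.
  exists (s1 ++ s2); split.
    by move=> g; rewrite mem_cat => /orP[/H1|/H2].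
  by rewrite big_cat /= -E1 -E2 mulrC.
by move=> H mq; apply: (H (size q)).
Qed.


Lemma irr_eq g1 g2 : irreducible_poly g1 -> irreducible_poly g2 ->
  g1 \is monic -> g2 \is monic -> g1 %| g2 -> g1 = g2.
Proof.
move=> i1 i2 m1 m2 d; apply/eqP; rewrite -eqp_monic //.
by apply: i2 => //; rewrite neq_ltn i1.1 orbT.
Qed.

Lemma irr_coprime2 g1 g2 : irreducible_poly g1 -> irreducible_poly g2 ->
  g1 \is monic -> g2 \is monic -> g1 != g2 -> coprimep g1 g2.
Proof.
move=> i1 i2 m1 m2 ne; apply: irr_coprime => //.
by apply: contra ne => d; rewrite (irr_eq i1 i2).
Qed.

Lemma dvdp_prod_mem (I : eqType) (r : seq I) (Q : I -> {poly F}) i :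
  i \in r -> Q i %| \prod_(j <- r) Q j.
Proof. by move=> ir; rewrite (big_rem i ir) /= dvdp_mulr. Qed.

Lemma sep_uniq (s : seq {poly F}) :
  (forall g, g \in s -> (1 < size g)%N) -> separable_poly (\prod_(g <- s) g) -> uniq s.
Proof.
elim: s => [|g s IH] //= H sep; rewrite big_cons in sep.
apply/andP; split; last first.
  apply: IH; first by move=> h hs; apply: H; rewrite in_cons hs orbT.
  by apply: dvdp_separable sep; rewrite dvdp_mull.
apply/negP => gs.
have : coprimep g g.
  apply: (separable_coprime sep); rewrite dvdp_mul2l ?dvdp_prod_mem //.
  by rewrite -size_poly_gt0 (ltnW (H _ (mem_head _ _))).
by rewrite coprimepp; have := H _ (mem_head _ _); case: (size g) => [|[|]].
Qed.

Lemma fact_mem (s : seq {poly F}) h :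
  (forall g, g \in s -> g \is monic /\ irreducible_poly g) ->
  (h \in s <-> [/\ h \is monic, irreducible_poly h & h %| \prod_(g <- s) g]).
Proof.
move=> H; split.
  by move=> hs; have [mh ih] := H h hs; split => //; apply: dvdp_prod_mem.
case=> mh ih /(irr_dvd_prod ih) [g gs hg].
by have [mg ig] := H g gs; rewrite (irr_eq ih ig mh mg hg).
Qed.

Definition dvg (S : seq {poly F}) m := DvL S (fun g => mkseq (fun k => g ^+ k) m.+1).

Lemma dvg_spec (S : seq {poly F}) m :
  uniq S -> (forall g, g \in S -> g \is monic /\ irreducible_poly g) ->
  isDv ((\prod_(g <- S) g) ^+ m) (dvg S m) /\ size (dvg S m) = (m.+1 ^ size S)%N.
Proof.
move=> uS H; split.
  rewrite -prodrXl; apply: Dv_prod => //.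
    move=> g1 g2 g1S g2S ne; apply: coprimep_expl; apply: coprimep_expr.
    have [? ?] := H _ g1S; have [? ?] := H _ g2S; exact: irr_coprime2.
  by move=> g gS; have [? ?] := H _ gS; apply: Dv_pow.
rewrite /dvg size_DvL.
under eq_bigr do rewrite size_mkseq.
by rewrite big_const_seq count_predT; elim: (size S) => //= k ->; rewrite expnS.
Qed.

Lemma count_ndvd q s d : isDv q s -> d %| q ->
  count (fun h => ~~ (h %| d)) s = subn (size s) (count (fun h => h %| d) s).
Proof.
move=> _ _; rewrite -(count_predC (fun h => h %| d) s).
by rewrite addKn.
Qed.


Lemma group_count (S : seq {poly F}) m :
  uniq S -> (forall g, g \in S -> g \is monic /\ irreducible_poly g) -> (0 < m)%N ->
  count (fun x => ~~ (x %| (\prod_(g <- S) g) ^+ m.-1)) (dvg S m) =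
  subn (m.+1 ^ size S) (m ^ size S).
Proof.
move=> uS H m0.
have [D1 s1] := dvg_spec m uS H.
have [D2 s2] := dvg_spec m.-1 uS H.
have dd : (\prod_(g <- S) g) ^+ m.-1 %| (\prod_(g <- S) g) ^+ m.
  by rewrite dvdp_exp2l // leq_pred.
rewrite (count_ndvd D1 dd) s1 -size_filter.
by rewrite (Dv_size (Dv_filter D1 dd) D2) s2 prednK.
Qed.

Lemma deg_prod (S : seq {poly F}) : (forall g, g \in S -> g \is monic) ->
  (size (\prod_(g <- S) g)).-1 = (\sum_(g <- S) (size g).-1)%N.
Proof.
elim: S => [|g S IH] H; first by rewrite !big_nil size_poly1.
rewrite !big_cons -IH; last by move=> h hS; apply: H; rewrite in_cons hS orbT.
have g0 : g != 0 by apply: monic_neq0; apply: H; rewrite mem_head.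
have P0 : \prod_(h <- S) h != 0.
  by apply: monic_neq0; apply: prod_monic => h hS; apply: H; rewrite in_cons hS orbT.
rewrite size_mul //.
move: g0 P0; rewrite -!size_poly_gt0.
move: (size g) (size (\prod_(h <- S) h)) => a b; lia.
Qed.

Lemma sum_ge1 (S : seq {poly F}) (c : {poly F} -> nat) :
  (forall g, g \in S -> (1 <= c g)%N) ->
  (size S <= \sum_(g <- S) c g)%N /\
  ((\sum_(g <- S) c g)%N = size S <-> forall g, g \in S -> c g = 1%N).
Proof.
elim: S => [|g S IH] H; first by rewrite big_nil.
have [IH1 IH2] : _ := IH (fun h hS => H h (@mem_behead _ (g :: S) h hS)).
have cg := H g (mem_head _ _).
rewrite big_cons /=; split; first by lia.
split.
  move=> E.
  have E1 : c g = 1%N by lia.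
  have E2 : (\sum_(h <- S) c h)%N = size S by lia.
  by move=> h; rewrite in_cons => /orP[/eqP ->|hS] //; exact: (proj1 IH2 E2 h hS).
move=> all1; rewrite all1 ?mem_head // (proj2 IH2) //.
by move=> h hS; apply: all1; rewrite in_cons hS orbT.
Qed.

Lemma irr_delta (S : seq {poly F}) :
  uniq S -> (forall g, g \in S -> g \is monic /\ irreducible_poly g) ->
  (irreducible_poly (\prod_(g <- S) g) <-> size S = 1%N).
Proof.
move=> uS H; split; last first.
  by case: S uS H => [|g [|]] // _ H _; rewrite big_seq1; apply: (H g (mem_head _ _)).2.
move=> irr.
have mP : \prod_(g <- S) g \is monic by apply: prod_monic => g /H [].
have E : forall h, h \in S -> h = \prod_(g <- S) g.
  move=> h hS; have [mh ih] := H h hS; apply/eqP; rewrite -eqp_monic //.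
  apply: irr; first by rewrite neq_ltn ih.1 orbT.
  exact: dvdp_prod_mem.
case: S uS H E irr mP => [|g [|g' S]] //.
  by rewrite big_nil => _ _ _ [] ; rewrite size_poly1.
move=> /= /andP [ngS _] _ E _ _.
have eg := E g (mem_head _ _).
have g'in : g' \in [:: g, g' & S] by rewrite !inE eqxx orbT.
have eg' := E g' g'in.
by move: ngS; rewrite in_cons negb_or => /andP [ne _]; rewrite eg -eg' eqxx in ne.
Qed.

Definition splits (p : {poly F}) := exists r : seq F, p = \prod_(a <- r) ('X - a%:P).

Lemma splits1 : splits 1.
Proof. by exists [::]; rewrite big_nil. Qed.

Lemma splitsM p q : splits p -> splits q -> splits (p * q).
Proof. by move=> [r1 ->] [r2 ->]; exists (r1 ++ r2); rewrite big_cat. Qed.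

Lemma splitsX p k : splits p -> splits (p ^+ k).
Proof.
move=> sp; elim: k => [|k IH]; first by rewrite expr0; exact: splits1.
by rewrite exprS; apply: splitsM.
Qed.

Lemma splits_prod (I : eqType) (r : seq I) (P : I -> {poly F}) :
  (forall i, i \in r -> splits (P i)) -> splits (\prod_(i <- r) P i).
Proof.
elim: r => [|i r IH] H; first by rewrite big_nil; exact: splits1.
rewrite big_cons; apply: splitsM; first by apply: H; rewrite mem_head.
by apply: IH => j jr; apply: H; rewrite in_cons jr orbT.
Qed.

Lemma splits_lin g : g \is monic -> size g = 2%N -> splits g.
Proof.
move=> mg sg.
have g1 : g`_1 = 1 by move: mg; rewrite monicE /lead_coef sg => /eqP.
have E : g = 'X + (g`_0)%:P.
  rewrite -[g in LHS]coefK sg poly_def big_ord_recr big_ord1 /=.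
  by rewrite g1 scale1r expr1 expr0 -alg_polyC addrC.
exists [:: - g`_0]; rewrite big_seq1 polyCN opprK.
exact: E.
Qed.

Lemma splits_irr g : splits g -> forall h, irreducible_poly h -> h \is monic ->
  h %| g -> size h = 2%N.
Proof.
move=> [r ->] h ih mh /(irr_dvd_prod ih) [a _ ha].
by rewrite (irr_eq ih (irredp_XsubC a) mh (monicXsubC a) ha) size_XsubC.
Qed.

End PolyF.

Section Lin.
Variables (F : fieldType) (n : nat).
Local Notation d := n.+1.
Implicit Types (A : 'M[F]_d) (x : 'rV[F]_d).

Lemma cyc_surj A x : row_free (\matrix_(i < d) (x *m A ^+ i)) ->
  forall c : 'rV_d, exists a, c = x *m horner_mx A a.
Proof.
move=> rf c; set B := \matrix_(i < d) (x *m A ^+ i).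
have uB : B \in unitmx by rewrite -row_free_unit.
set u := c *m invmx B.
exists (\sum_(i < d) u 0 i *: 'X^i).
rewrite -[c](mulmxKV uB) -/u mulmx_sum_row raddf_sum mulmx_sumr /=.
apply: eq_bigr => i _; rewrite rowK linearZ /= rmorphXn /= horner_mx_X.
by rewrite scalemxAr.
Qed.

Lemma horner_comm A a b : horner_mx A a *m horner_mx A b = horner_mx A b *m horner_mx A a.
Proof. by rewrite !mulmxE -!rmorphM /= mulrC. Qed.

Lemma cyc_ker A x a : (forall c : 'rV_d, exists b, c = x *m horner_mx A b) ->
  (x *m horner_mx A a == 0) = (horner_mx A a == 0).
Proof.
move=> surj; apply/eqP/eqP => [H|->]; last by rewrite mulmx0.
apply/row_matrixP => i; rewrite row0 rowE.
have [b ->] := surj (delta_mx 0 i).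
by rewrite -mulmxA horner_comm mulmxA H mul0mx.
Qed.

Definition Ch A (h : {poly F}) : {vspace 'rV[F]_d} :=
  limg (linfun (mulmxr (horner_mx A h))).

Lemma memCh A h c : reflect (exists y, c = y *m horner_mx A h) (c \in Ch A h).
Proof.
apply: (iffP memv_imgP) => [[y _ ->]|[y ->]]; first by exists y; rewrite lfunE.
by exists y; rewrite ?memvf // lfunE.
Qed.

Definition stable A (C : {vspace 'rV[F]_d}) := forall c, c \in C -> c *m A \in C.

Lemma stable_poly A C q : stable A C -> forall c, c \in C -> c *m horner_mx A q \in C.
Proof.
move=> st; elim/poly_ind: q => [|q k IH] c cC.
  by rewrite rmorph0 mulmx0 mem0v.
rewrite rmorphD rmorphM /= horner_mx_X horner_mx_C mulmxDr mulmxA.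
rewrite memvD //; first by apply: st; apply: IH.
by rewrite mul_mx_scalar memvZ.
Qed.

Lemma Ch_stable A h : stable A (Ch A h).
Proof.
move=> c /memCh [y ->]; apply/memCh; exists (y *m A).
rewrite -!mulmxA; congr (_ *m _).
by have := horner_comm A h 'X; rewrite horner_mx_X.
Qed.

Section Class.
Variable (A : 'M[F]_d) (x : 'rV[F]_d).
Hypothesis surj : forall c : 'rV_d, exists b, c = x *m horner_mx A b.
Local Notation p := (mxminpoly A).

Lemma phi0 a : (x *m horner_mx A a == 0) = (p %| a).
Proof. by rewrite cyc_ker // dvd_mxminpoly. Qed.

Lemma phiM a b : x *m horner_mx A (a * b) = (x *m horner_mx A a) *m horner_mx A b.
Proof. by rewrite rmorphM /= -mulmxE mulmxA. Qed.

Lemma memCh_phi h a : h %| p -> (x *m horner_mx A a \in Ch A h) = (h %| a).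
Proof.
move=> hp; apply/memCh/idP => [[y E]|ha].
  have [b Eb] := surj y.
  move: E; rewrite Eb -phiM => /eqP; rewrite -subr_eq0 -mulmxBr -rmorphB /=.
  rewrite phi0 => /(dvdp_trans hp).
  by rewrite dvdp_subl // dvdp_mull.
by exists (x *m horner_mx A (a %/ h)); rewrite -phiM divpK.
Qed.

Lemma Ch_inj h1 h2 : h1 \is monic -> h2 \is monic -> h1 %| p -> h2 %| p ->
  Ch A h1 = Ch A h2 -> h1 = h2.
Proof.
move=> m1 m2 d1 d2 E; apply/eqP; rewrite -eqp_monic //.
have x1 : x *m horner_mx A h1 \in Ch A h1 by rewrite memCh_phi.
have x2 : x *m horner_mx A h2 \in Ch A h2 by rewrite memCh_phi.
rewrite E memCh_phi // in x1; rewrite -E memCh_phi // in x2.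
by rewrite /eqp x1 x2.
Qed.

Lemma stable_Ch C : stable A C -> exists2 h, (h \is monic) && (h %| p) & C = Ch A h.
Proof.
move=> st.
pose I a := x *m horner_mx A a \in C.
have Ip : I p by rewrite /I mx_root_minpoly mulmx0 mem0v.
have Imul a b : I a -> I (a * b) by rewrite /I phiM; apply: stable_poly.
have Isub a b : I a -> I b -> I (a - b) by rewrite /I rmorphB mulmxBr; apply: memvB.
have IZ k a : I a -> I (k *: a) by rewrite /I linearZ /= -scalemxAr; apply: memvZ.
have ex : exists k, `[< exists a, [/\ I a, a \is monic & size a = k] >].
  by exists (size p); apply/asboolP; exists p; split => //; exact: mxminpoly_monic.
have [k /asboolP [h [Ih mh sh]] kmin] := ex_minnP ex.
have Imod a : I a -> a %% h = 0.
  move=> Ia; apply/eqP; apply/negPn/negP => nz.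
  have Ir : I (a %% h).
    have -> : a %% h = a - a %/ h * h by rewrite [X in X - _](divp_eq a h) addrAC subrr add0r.
    by apply: Isub => //; rewrite mulrC Imul.
  have sr : (size (a %% h)%R < size h)%N by rewrite ltn_modp monic_neq0.
  set r := a %% h in nz Ir sr.
  have mr : (lead_coef r)^-1 *: r \is monic by rewrite monicE lead_coefZ mulVf ?lead_coef_eq0.
  have r0 : (lead_coef r)^-1 != 0 by rewrite invr_eq0 lead_coef_eq0.
  have Pr : `[< exists a, [/\ I a, a \is monic & size a = size r] >].
    apply/asboolP.
    by exists ((lead_coef r)^-1 *: r); split => //; [apply: IZ | rewrite size_scale].
  by have := kmin _ Pr; rewrite -sh leqNgt sr.
have hp : h %| p by apply/modp_eq0P; apply: Imod.
exists h; first by rewrite mh hp.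
apply/vspaceP => c; apply/idP/idP => [cC|/memCh [y ->]].
  have [a Ea] := surj c; rewrite Ea memCh_phi //.
  by apply/modp_eq0P; apply: Imod; rewrite /I -Ea.
have [b ->] := surj y; rewrite -phiM mulrC.
exact: Imul.
Qed.
End Class.

End Lin.

Section Bad.
Variables (K L : fieldType) (fm : {rmorphism K -> L}) (s : nat)
  (f : 'I_s -> {poly K}) (m : 'I_s -> nat).
Hypotheses (finj : injective f) (fmon : forall i, f i \is monic)
  (firr : forall i, irreducible_poly (f i)) (mpos : forall i, (1 <= m i)%N).

Local Notation fL i := (map_poly fm (f i)).
Local Notation Q i := (fL i ^+ m i).
Local Notation fK := (\prod_(i < s) f i ^+ m i).

Lemma cop_f i j : i != j -> coprimep (f i) (f j).
Proof.
move=> ne; apply: irr_coprime2 => //.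
by apply: contra ne => /eqP /finj ->.
Qed.

Lemma cop_R (i : 'I_s) : coprimep (f i ^+ m i) (\prod_(j < s | j != i) f j ^+ m j).
Proof.
rewrite -big_filter; apply: coprime_prodr => j.
rewrite mem_filter => /andP[ne _]; apply: coprimep_expl; apply: coprimep_expr.
by apply: cop_f; rewrite eq_sym.
Qed.

Lemma prod_dvd (r : seq 'I_s) (d : {poly K}) : uniq r ->
  (forall i, i \in r -> f i ^+ m i %| d) -> \prod_(i <- r) f i ^+ m i %| d.
Proof.
elim: r => [|i r IH] /= ur H; first by rewrite big_nil dvd1p.
case/andP: ur => nir ur; rewrite big_cons Gauss_dvdp.
  by rewrite H ?mem_head //= IH // => j jr; apply: H; rewrite in_cons jr orbT.
apply: coprime_prodr => j jr; apply: coprimep_expl; apply: coprimep_expr.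
by apply: cop_f; apply: contraNneq nir => ->.
Qed.

Lemma map_fK : map_poly fm fK = \prod_(i < s) Q i.
Proof. by rewrite rmorph_prod; apply: eq_bigr => i _; rewrite rmorphXn. Qed.

Lemma bad_char (h : {poly L}) : h %| \prod_(i < s) Q i ->
  (exists a : {poly K}, ~~ (fK %| a) /\ h %| map_poly fm a) <->
  (exists i, gcdp h (Q i) %| fL i ^+ (m i).-1).
Proof.
move=> hp; split.
- move=> [a [nfa ha]].
  set d0 := gcdp a fK.
  have hd0 : h %| map_poly fm d0 by rewrite gcdp_map dvdp_gcd ha map_fK.
  have [i ni] : exists i, ~~ (f i ^+ m i %| d0).
    apply: contrapT => H; move/negP: nfa; apply; apply: (dvdp_trans _ (dvdp_gcdl a fK)).
    apply: prod_dvd; first exact: index_enum_uniq.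
    by move=> i _; apply/negPn/negP => ni; apply: H; exists i.
  set e := gcdp d0 (f i ^+ m i).
  have ei : e %| f i ^+ (m i).-1.
    have mi := mpos i; move: ni; rewrite /e; case: (m i) mi => // k _ ni.
    apply: pp_step => //; first exact: dvdp_gcdr.
    by apply: contra ni => H; apply: dvdp_trans H (dvdp_gcdl _ _).
  set R := \prod_(j < s | j != i) f j ^+ m j.
  have fKE : fK = f i ^+ m i * R by rewrite (bigD1 i).
  have d0R : d0 %| f i ^+ (m i).-1 * R.
    have : d0 %| gcdp (f i ^+ m i * R) (d0 * R).
      by rewrite dvdp_gcd -fKE dvdp_gcdr dvdp_mulr.
    move/dvdp_trans; apply; rewrite -(eqp_dvdl _ (mulp_gcdl _ _ _)).
    apply: dvdp_mul => //; rewrite (eqp_dvdl _ (gcdpC _ _)) //.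
  have hR : h %| fL i ^+ (m i).-1 * map_poly fm R.
    apply: dvdp_trans hd0 _; rewrite -rmorphXn -rmorphM /= dvdp_map //.
  exists i.
  have cR : coprimep (gcdp h (Q i)) (map_poly fm R).
    apply: (coprimep_dvdr (dvdp_gcdr _ _)).
    by rewrite -rmorphXn coprimep_map cop_R.
  rewrite -(Gauss_dvdpl _ cR).
  exact: dvdp_trans (dvdp_gcdl _ _) hR.
- move=> [i hi].
  set R := \prod_(j < s | j != i) f j ^+ m j.
  have fKE : fK = f i ^+ m i * R by rewrite (bigD1 i).
  exists (f i ^+ (m i).-1 * R); split.
    have R0 : R != 0.
      rewrite prodf_seq_neq0; apply/allP => j _; apply/implyP => _.
      by rewrite expf_neq0 // monic_neq0.
    have fi0 := monic_neq0 (fmon i).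
    have ep : f i ^+ m i = f i * f i ^+ (m i).-1.
      by rewrite -exprS prednK // mpos.
    rewrite fKE ep -mulrA; apply/negP => H.
    have := dvdp_leq (mulf_neq0 (expf_neq0 _ fi0) R0) H.
    rewrite size_mul ?mulf_neq0 ?expf_neq0 //.
    have := (firr i).1; set z := size (f _ ^+ _ * R); have : (0 < z)%N.
      by rewrite size_poly_gt0 mulf_neq0 ?expf_neq0.
    lia.
  rewrite rmorphM rmorphXn /=.
  have hmR : h %| Q i * map_poly fm R.
    by move: hp; rewrite -map_fK fKE rmorphM rmorphXn.
  have : h %| gcdp (Q i * map_poly fm R) (h * map_poly fm R).
    by rewrite dvdp_gcd hmR dvdp_mulr.
  move/dvdp_trans; apply; rewrite -(eqp_dvdl _ (mulp_gcdl _ _ _)).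
  apply: dvdp_mul => //; rewrite (eqp_dvdl _ (gcdpC _ _)) //.
Qed.
End Bad.

Lemma horner_mx_tr (F : fieldType) n (A : 'M[F]_n.+1) q :
  horner_mx A^T q = (horner_mx A q)^T.
Proof.
elim/poly_ind: q => [|q c IH]; first by rewrite !rmorph0 trmx0.
rewrite !rmorphD !rmorphM /= !horner_mx_X !horner_mx_C IH linearD /= tr_scalar_mx.
congr (_ + _); rewrite -!mulmxE -trmx_mul.
by have := horner_comm A q 'X; rewrite horner_mx_X => ->.
Qed.

Lemma mxminpoly_tr (F : fieldType) n (A : 'M[F]_n.+1) : mxminpoly A^T = mxminpoly A.
Proof.
apply/eqP; rewrite -eqp_monic ?mxminpoly_monic //; apply/andP; split.
  by apply: mxminpoly_min; rewrite horner_mx_tr mx_root_minpoly trmx0.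
apply: mxminpoly_min; apply: trmx_inj; rewrite -horner_mx_tr mx_root_minpoly.
by rewrite trmx0.
Qed.

Lemma map_mxXn (aR rR : fieldType) (g : {rmorphism aR -> rR}) n (A : 'M[aR]_n.+1) k :
  map_mx g (A ^+ k) = (map_mx g A) ^+ k.
Proof.
elim: k => [|k IH]; first by rewrite !expr0 map_mx1.
by rewrite !exprS -!mulmxE map_mxM IH.
Qed.

Section Wt.
Variables (K : fieldType) (L : fieldExtType K) (d : nat).
Implicit Types (c : 'rV[L]_d) (u : 'rV[K]_d).

Local Notation mL u := (map_mx (in_alg L) u).

Lemma rV_neq0 c : c != 0 -> exists j, c ord0 j != 0.
Proof.
move=> c0; apply: contrapT => H; apply/negP: c0; apply/negPn/eqP/rowP => j.
rewrite mxE; apply/eqP/negPn/negP => cj; apply: H; exists j.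
by rewrite (_ : ord0 = 0) //; apply: val_inj.
Qed.

Local Notation S c := (<<[seq c ord0 i | i <- enum 'I_d]>>%VS : {vspace L}).

Lemma inS c j : c ord0 j \in S c.
Proof. by apply: memv_span; apply: map_f; rewrite mem_enum. Qed.

Lemma wt_gt0 c : c != 0 -> (0 < wtR c)%N.
Proof.
move=> /rV_neq0 [j cj]; rewrite /wtR lt0n dimv_eq0; apply/negP => /eqP S0.
by have := inS c j; rewrite S0 memv0 (negPf cj).
Qed.

Lemma wt1_inv c : c != 0 -> wtR c = 1%N ->
  exists lam : L, exists u : 'rV[K]_d, lam != 0 /\ c = lam *: mL u.
Proof.
move=> c0 w1; have [j cj] := rV_neq0 c0.
have SE : S c = <[c ord0 j]>%VS.
  apply/eqP; rewrite eq_sym eqEdim -memvE inS /= dim_vline cj.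
  by move: w1; rewrite /wtR => ->.
have /choice [k Hk] : forall i : 'I_d, exists k : K, c ord0 i = k *: c ord0 j.
  by move=> i; apply/vlineP; rewrite -SE inS.
exists (c ord0 j), (\row_i k i); split => //.
apply/rowP => i.
rewrite !mxE.
rewrite (_ : c 0 i = k i *: c ord0 j); last by rewrite -Hk.
by rewrite in_algE -scalerAr mulr1.
Qed.

Lemma wt1_rat u : u != 0 -> wtR (mL u) = 1%N.
Proof.
move=> u0; apply/eqP; rewrite eqn_leq wt_gt0 ?andbT; last first.
  by rewrite map_mx_eq0.
have sub : (S (mL u) <= <[1 : L]>)%VS.
  apply/span_subvP => x /mapP [i _ ->]; rewrite mxE in_algE.
  by apply/vlineP; exists (u ord0 i).
by rewrite /wtR (leq_trans (dimvS sub)) // dim_vline oner_neq0.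
Qed.
Lemma M1_eq1 (C : {vspace 'rV[L]_d}) :
  M1 C = 1%N <-> exists u : 'rV[K]_d, u != 0 /\ mL u \in C.
Proof.
rewrite /M1; case: pselect => [H|H].
  case: ex_minnP => k /asboolP [c cC /andP[c0 /eqP wc]] kmin.
  split.
    move=> k1; have [lam [u [l0 E]]] := wt1_inv c0 (etrans wc k1).
    exists u; split.
      by apply: contra c0 => /eqP u0; rewrite E u0 map_mx0 scaler0.
    have -> : mL u = lam^-1 *: c by rewrite E scalerA mulVf // scale1r.
    exact: memvZ.
  move=> [u [u0 uC]]; apply/eqP; rewrite eqn_leq -wc wt_gt0 // andbT wc.
  apply: kmin; apply/asboolP; exists (mL u) => //.
  by rewrite map_mx_eq0 u0 wt1_rat.
split => // -[u [u0 uC]]; exfalso; apply: H; exists 1%N; apply/asboolP.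
by exists (mL u) => //; rewrite map_mx_eq0 u0 wt1_rat.
Qed.

End Wt.

Import Order.TTheory Num.Theory.

Definition qq (m : nat) : rat := m%:R / m.+1%:R.

Lemma qq_gt0 m : (0 < m)%N -> 0 < qq m.
Proof. by move=> m0; rewrite /qq divr_gt0 // ltr0n. Qed.

Lemma qq_lt1 m : qq m < 1.
Proof. by rewrite /qq ltr_pdivrMr ?ltr0n // mul1r ltr_nat. Qed.

Lemma one_sub_qq m : 1 - qq m = (m.+1%:R)^-1.
Proof.
have h : (m.+1%:R : rat) != 0 by rewrite pnatr_eq0.
rewrite /qq; move: h; rewrite -natr1 => h; field.
by [].
Qed.

Lemma ratio_eq m d : (d = d)%N ->
  ((m.+1 ^ d - m ^ d)%N%:R / (m.+1 ^ d)%N%:R : rat) = 1 - qq m ^+ d.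
Proof.
move=> _.
have E1 : ((m.+1 ^ d - m ^ d)%N%:R : rat) = (m.+1%:R)^+d - (m%:R)^+d.
  have le : (m ^ d <= m.+1 ^ d)%N by elim: (d) => // k IH; rewrite !expnS leq_mul.
  by rewrite natrB // !natrX.
have E2 : ((m.+1 ^ d)%N%:R : rat) = (m.+1%:R)^+d by rewrite natrX.
rewrite E1 E2 /qq expr_div_n.
have h : (m.+1%:R : rat) ^+ d != 0 by rewrite expf_neq0 // pnatr_eq0.
by field.
Qed.

Lemma fac_pos m d : (0 < m)%N -> (0 < d)%N -> 0 < 1 - qq m ^+ d.
Proof.
move=> m0 d0; rewrite subr_gt0 exprn_ilt1 ?ltW ?qq_gt0 ?qq_lt1 //.
by rewrite -lt0n.
Qed.

Lemma low_le m d : (0 < m)%N -> (0 < d)%N -> (m.+1%:R)^-1 <= 1 - qq m ^+ d.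
Proof.
move=> m0 d0; rewrite -one_sub_qq lerD2l lerN2 -{2}(expr1 (qq m)).
by rewrite ler_wiXn2l ?ltW ?qq_gt0 ?qq_lt1.
Qed.

Lemma low_eq m d : (0 < m)%N -> (m.+1%:R)^-1 = 1 - qq m ^+ d -> d = 1%N.
Proof.
move=> m0; rewrite -one_sub_qq => /addrI/oppr_inj; rewrite -{1}(expr1 (qq m)).
by move/(ieexprIn (qq_gt0 m0) (negbT (lt_eqF (qq_lt1 m)))).
Qed.

Lemma up_le m d e : (0 < m)%N -> (d <= e)%N -> 1 - qq m ^+ d <= 1 - qq m ^+ e.
Proof.
move=> m0 de; rewrite lerD2l lerN2.
by rewrite ler_wiXn2l ?ltW ?qq_gt0 ?qq_lt1.
Qed.

Lemma up_eq m d e : (0 < m)%N -> 1 - qq m ^+ d = 1 - qq m ^+ e -> d = e.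
Proof.
move=> m0 /addrI/oppr_inj.
exact: (ieexprIn (qq_gt0 m0) (negbT (lt_eqF (qq_lt1 m)))).
Qed.

Lemma prod_eq_le (s : nat) (a b : 'I_s -> rat) :
  (forall i, 0 < a i /\ a i <= b i) ->
  \prod_(i < s) a i = \prod_(i < s) b i -> forall i, a i = b i.
Proof.
move=> H E i; apply/eqP; rewrite eq_le (H i).2 /=; apply/negP => /negP.
rewrite -ltNge => lt.
have Xp : 0 < \prod_(j < s | j != i) a j.
  by apply: prodr_gt0 => j _; apply: (H j).1.
have Yp : 0 < \prod_(j < s | j != i) b j.
  apply: prodr_gt0 => j _; apply: lt_le_trans (H j).2; exact: (H j).1.
have XY : \prod_(j < s | j != i) a j <= \prod_(j < s | j != i) b j.
  by apply: ler_prod => j _; rewrite ltW ?(H j).1 ?(H j).2.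
move: E; rewrite (bigD1 i) // [in RHS](bigD1 i) //= => E.
have h1 : a i * \prod_(j < s | j != i) a j <= a i * \prod_(j < s | j != i) b j.
  by rewrite ler_pM2l ?(H i).1.
have h2 : a i * \prod_(j < s | j != i) b j < b i * \prod_(j < s | j != i) b j.
  by rewrite ltr_pM2r.
by have := le_lt_trans h1 h2; rewrite E ltxx.
Qed.

Lemma G1 m d : (0 < m)%N -> (0 < d)%N -> (m.+1 ^ d - m ^ d)%N = 1%N -> d = 1%N.
Proof.
move=> m0 d0; case: d d0 => // k _.
case: k => // j.
rewrite (expnS m.+1) (expnS m).
have ut : (m ^ j.+1 <= m.+1 ^ j.+1)%N by rewrite leq_exp2r.
have h1 : (m * m ^ j.+1 <= m * m.+1 ^ j.+1)%N by rewrite leq_mul.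
have t2 : (2 <= m.+1 ^ j.+1)%N.
  rewrite expnS; apply: (@leq_trans (m.+1 * 1)%N); first by rewrite muln1 ltnS.
  by rewrite leq_mul // expn_gt0.
move: ut h1 t2; rewrite mulSn.
move: (m ^ j.+1)%N (m.+1 ^ j.+1)%N (m * m ^ j.+1)%N => u t mu.
move: (m * t)%N => mt; lia.
Qed.

Lemma count2 (T : eqType) (s : seq T) (P : pred T) x y :
  uniq s -> x \in s -> y \in s -> x != y -> P x -> P y -> (2 <= count P s)%N.
Proof.
move=> us xs ys ne Px Py; rewrite -size_filter.
have : {subset [:: x; y] <= filter P s} by move=> z; rewrite !inE mem_filter => /orP[]/eqP ->; rewrite ?Px ?Py.
by move/(uniq_leq_size (_ : uniq [:: x; y])); apply; rewrite /= inE ne.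
Qed.

Unset Implicit Arguments. Set Strict Implicit.

Theorem theorem4 (K : fieldType) (L : fieldExtType K) (n : nat)
  (M : 'M[K]_n.+1) (s : nat) (f : 'I_s -> {poly K}) (m : 'I_s -> nat) :
  (n.+1 <= \dim {:L})%N ->
  cyclic_mx M ->
  injective f ->
  (forall i, f i \is monic) ->
  (forall i, irreducible_poly (f i)) ->
  (forall i, separable_poly (f i)) ->
  (forall i, 1 <= m i)%N ->
  mxminpoly M = \prod_(i < s) f i ^+ m i ->
  let fL i := map_poly (in_alg L) (f i) in
  exists (delta : 'I_s -> nat) (codes : seq {vspace 'rV[L]_n.+1}),
    let P : rat := (count (fun C => (C == 0%VS) || (M1 C != 1%N)) codes)%:R
                   / (size codes)%:R in
    let lowP : rat := \prod_(i < s) ((m i).+1%:R)^-1 in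
    let upP : rat := \prod_(i < s)
        (1 - ((m i)%:R / (m i).+1%:R) ^+ (size (f i)).-1) in
    [/\ [/\ (forall i, is_delta (fL i) (delta i)),
          uniq codes &
          (forall C : {vspace 'rV[L]_n.+1}, C \in codes <-> Mcyclic_code M C)],
        P = \prod_(i < s) (1 - ((m i)%:R / (m i).+1%:R) ^+ delta i),
        lowP <= P /\ P <= upP,
        (P = lowP <-> (forall i, irreducible_poly (fL i))) /\
        (P = lowP <-> (forall C : {vspace 'rV[L]_n.+1}, Mcyclic_code M C -> C != 0%VS -> M1 C = 1%N))
      & (P = upP <-> exists r : seq L,
           map_poly (in_alg L) (mxminpoly M) = \prod_(a <- r) ('X - a%:P))].
Proof.
move=> hdim cyc finj fmon firr fsep mpos Hmin fL.
have /choice [S HS] : forall i : 'I_s, exists Si : seq {poly L},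
   [/\ uniq Si, (forall g, g \in Si -> g \is monic /\ irreducible_poly g) &
       fL i = \prod_(g <- Si) g].
  move=> i.
  have mi : fL i \is monic by rewrite /fL map_monic.
  have [Si [H E]] := factor_exists mi.
  exists Si; split => //.
  apply: sep_uniq; first by move=> g /H [_ ig]; exact: ig.1.
  by rewrite -E /fL separable_map.
pose delta i := size (S i).
have dpos : forall i, (0 < delta i)%N.
  move=> i; have [_ _ E] := HS i; rewrite lt0n; apply/negP => /eqP/size0nil S0.
  have := (firr i).1; rewrite -(size_map_poly (in_alg L)) -/(fL i) E S0 big_nil.
  by rewrite size_poly1.
set N := (map_mx (in_alg L) M)^T.
have [v rfv] := cyc.
set w := map_mx (in_alg L) v.
have mapT : forall (A : 'M[K]_n.+1), map_mx (in_alg L) A^T = (map_mx (in_alg L) A)^T.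
  by move=> A; apply/matrixP => i j; rewrite !mxE.
have rfw : row_free (\matrix_(i < n.+1) (w *m N ^+ i)).
  have -> : \matrix_(i < n.+1) (w *m N ^+ i) =
            map_mx (in_alg L) (\matrix_(i < n.+1) (v *m M^T ^+ i)).
    apply/row_matrixP => i; rewrite rowK -map_row rowK map_mxM map_mxXn mapT.
    by [].
  by rewrite row_free_unit map_unitmx -row_free_unit.
have surjL := cyc_surj rfw.
have surjK := cyc_surj rfv.
have pN : mxminpoly N = \prod_(i < s) fL i ^+ m i.
  by rewrite /N mxminpoly_tr mxminpoly_map Hmin map_fK.
pose Q i := fL i ^+ m i.
pose DP := DvL (index_enum 'I_s) (fun i => dvg (S i) (m i)).
have copQ : forall i j, i \in index_enum 'I_s -> j \in index_enum 'I_s -> i != j -> coprimep (Q i) (Q j).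
    move=> i j _ _ ne; rewrite /Q /fL -!rmorphXn coprimep_map.
    by apply: coprimep_expl; apply: coprimep_expr; apply: cop_f.
have DvQ : forall i, i \in index_enum 'I_s -> isDv (Q i) (dvg (S i) (m i)).
  move=> i _; have [uS HSi E] := HS i.
  by rewrite /Q E; exact: (dvg_spec (m i) uS HSi).1.
have DPspec : isDv (\prod_(i < s) Q i) DP.
  by apply: Dv_prod; first exact: index_enum_uniq.
have pQ : mxminpoly N = \prod_(i < s) Q i by rewrite pN.
have DPdiv : forall h, h \in DP -> (h \is monic) && (h %| mxminpoly N).
  by move=> h; rewrite DPspec.2 pQ.
pose codes := map (Ch N) DP.
exists delta, codes.
have codesP : forall C : {vspace 'rV[L]_n.+1}, C \in codes <-> Mcyclic_code M C.
  move=> C; split.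
    by case/mapP => h _ ->; apply: Ch_stable.
  move=> st; have [h hp ->] := stable_Ch surjL st.
  by apply: map_f; rewrite DPspec.2 -pQ.
have ucodes : uniq codes.
  rewrite map_inj_in_uniq ?DPspec.1 // => h1 h2 /DPdiv /andP[m1 d1] /DPdiv /andP[m2 d2].
  exact: Ch_inj surjL h1 h2 m1 m2 d1 d2.
have mapu : forall a : {poly K},
    map_mx (in_alg L) (v *m horner_mx M^T a) = w *m horner_mx N (map_poly (in_alg L) a).
  by move=> a; rewrite map_mxM map_horner_mx mapT.
have fKN : mxminpoly N = map_poly (in_alg L) (\prod_(i < s) f i ^+ m i).
  by rewrite pN map_fK.
have key : forall h, h \in DP ->
    (M1 (Ch N h) != 1%N) = all (fun i => ~~ (gcdp h (Q i) %| fL i ^+ (m i).-1)) (index_enum 'I_s).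
  move=> h hD; have /andP[mh hp] := DPdiv h hD.
  have hp' : h %| \prod_(i < s) map_poly (in_alg L) (f i) ^+ m i by rewrite -pN.
  apply/idP/idP.
  - move=> nM; apply/allP => i _; apply/negP => Hi; move/eqP: nM; apply.
    have [a [na ha]] := (proj2 (bad_char finj fmon firr mpos hp')) (ex_intro _ i Hi).
    apply/M1_eq1; exists (v *m horner_mx M^T a); split.
      apply: contra na => /eqP u0.
      by rewrite -(dvdp_map (in_alg L)) -fKN -(phi0 surjL) -mapu u0 map_mx0.
    by rewrite mapu (memCh_phi surjL).
  - move/allP => Hall; apply/eqP => /M1_eq1 [u [u0 uC]].
    have [a Ea] := surjK u.
    have : exists a : {poly K}, ~~ (\prod_(i < s) f i ^+ m i %| a) /\
           h %| map_poly (in_alg L) a.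
      exists a; split.
        apply: contra u0 => H; rewrite -(map_mx_eq0 (in_alg L)) Ea mapu (phi0 surjL).
        by rewrite fKN dvdp_map.
      by rewrite -(memCh_phi surjL) // -mapu -Ea.
    move/(bad_char finj fmon firr mpos hp') => [i Hi].
    by have := Hall i (mem_index_enum i); rewrite Hi.
have good_eq : forall C : {vspace 'rV[L]_n.+1}, ((C == 0%VS) || (M1 C != 1%N)) = (M1 C != 1%N).
  move=> C; case: eqP => // ->; apply/esym/eqP => /M1_eq1 [u [u0]].
  by rewrite memv0 map_mx_eq0 (negPf u0).
have cnt : count (fun C => (C == 0%VS) || (M1 C != 1%N)) codes =
           (\prod_(i < s) ((m i).+1 ^ delta i - m i ^ delta i))%N.
  rewrite (eq_count good_eq) count_map (eq_in_count key).
  rewrite (count_DvL (G := fun i u => ~~ (u %| fL i ^+ (m i).-1))) //.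
  - apply: eq_bigr => i _; have [uS HSi E] := HS i.
    by rewrite E; apply: group_count.
  - exact: index_enum_uniq.
  - by move=> i u u' e; rewrite (eqp_dvdl _ e).
have sz : size codes = (\prod_(i < s) (m i).+1 ^ delta i)%N.
  rewrite size_map size_DvL; apply: eq_bigr => i _; have [uS HSi E] := HS i.
  exact: (dvg_spec (m i) uS HSi).2.
move=> P lowP upP.
have PE : P = \prod_(i < s) (1 - qq (m i) ^+ delta i).
  rewrite /P cnt sz !natr_prod -prodf_div; apply: eq_bigr => i _; exact: ratio_eq.
have sfL : forall i, size (fL i) = size (f i) by move=> i; rewrite /fL size_map_poly.
have degS : forall i, (size (f i)).-1 = (\sum_(g <- S i) (size g).-1)%N.
  move=> i; have [uS HSi E] := HS i; rewrite -sfL E deg_prod //.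
  by move=> g /HSi [].
have sumS : forall i, (delta i <= (size (f i)).-1)%N /\
    ((size (f i)).-1 = delta i <-> forall g, g \in S i -> (size g).-1 = 1%N).
  move=> i; have [uS HSi E] := HS i; rewrite degS.
  apply: sum_ge1 => g /HSi [_ ig] /=; have := ig.1; move: (size g) => k; lia.
have lowE : P = lowP <-> forall i, delta i = 1%N.
  split.
    move=> E i; apply: low_eq (mpos i) _.
    have H1 : forall j, 0 < ((m j).+1%:R : rat)^-1 /\ ((m j).+1%:R)^-1 <= 1 - qq (m j) ^+ delta j.
      by move=> j; split; [rewrite invr_gt0 ltr0n | apply: low_le].
    exact: (prod_eq_le H1 (etrans (esym E) PE) i).
  move=> H; rewrite PE /lowP; apply: eq_bigr => i _.
  by rewrite H expr1 one_sub_qq.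
have upE : P = upP <-> forall i, delta i = (size (f i)).-1.
  split.
    move=> E i; apply: up_eq (mpos i) _.
    have H1 : forall j, 0 < 1 - qq (m j) ^+ delta j /\
        1 - qq (m j) ^+ delta j <= 1 - qq (m j) ^+ (size (f j)).-1.
      by move=> j; split; [apply: fac_pos | apply: up_le; case: (sumS j)].
    exact: (prod_eq_le H1 (etrans (esym PE) E) i).
  move=> H; rewrite PE /upP; apply: eq_bigr => i _.
  by rewrite H.
have irrE : (forall i, delta i = 1%N) <-> (forall i, irreducible_poly (fL i)).
  split => H i; have [uS HSi E] := HS i.
    by rewrite E; apply/(irr_delta uS HSi); exact: H i.
  by apply/(irr_delta uS HSi); rewrite -E; exact: H i.
have splitE : (forall i, delta i = (size (f i)).-1) <->
    exists r : seq L, map_poly (in_alg L) (mxminpoly M) = \prod_(a <- r) ('X - a%:P).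
  have mE : map_poly (in_alg L) (mxminpoly M) = \prod_(i < s) Q i by rewrite Hmin map_fK.
  split.
    move=> H; rewrite mE; apply: splits_prod => i _; rewrite /Q; apply: splitsX.
    have [uS HSi E] := HS i; rewrite E; apply: splits_prod => g gS.
    have [mg ig] := HSi g gS; apply: splits_lin => //.
    have := proj1 (proj2 (sumS i)) (esym (H i)) g gS; have := ig.1.
    by move: (size g) => k; lia.
  move=> spl i; have [uS HSi E] := HS i.
  apply/esym/(proj2 (sumS i)) => g gS; have [mg ig] := HSi g gS.
  have : size g = 2%N.
    apply: (splits_irr spl) => //; rewrite mE.
    apply: dvdp_trans (dvdp_prod_mem _ (mem_index_enum i)); rewrite /Q.
    apply: dvdp_trans (dvdp_exp2l _ (mpos i)); rewrite expr1 E.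
    exact: dvdp_prod_mem.
  by move=> ->.
have zc : (0%VS : {vspace 'rV[L]_n.+1}) \in codes.
  by apply/codesP => c; rewrite memv0 => /eqP ->; rewrite mul0mx mem0v.
have codeE : P = lowP <-> (forall C : {vspace 'rV[L]_n.+1}, Mcyclic_code M C -> C != 0%VS -> M1 C = 1%N).
  rewrite lowE; split.
    move=> H C cC C0; apply/eqP; apply: contrapT => nM0.
    have nM : M1 C != 1%N by apply/negP.
    have c1 : count (fun C => (C == 0%VS) || (M1 C != 1%N)) codes = 1%N.
      by rewrite cnt big1 // => i _; rewrite H expn1 expn1 subSnn.
    have := count2 (P := fun C => (C == 0%VS) || (M1 C != 1%N)) ucodes zc (proj2 (codesP C) cC).
    by rewrite eq_sym C0 eqxx nM orbT c1 => /(_ isT isT isT).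
  move=> H i.
  have c1 : count (fun C => (C == 0%VS) || (M1 C != 1%N)) codes = 1%N.
    rewrite (@eq_in_count _ _ (pred1 0%VS)); first by rewrite count_uniq_mem // zc.
    move=> C Cc /=; case: eqP => //= /eqP C0.
    by rewrite H // ; apply/codesP.
  have Gi : ((m i).+1 ^ delta i - m i ^ delta i)%N = 1%N.
    apply/eqP; rewrite -dvdn1 -c1 cnt (bigD1 i) //=; exact: dvdn_mulr.
  exact: G1 (mpos i) (dpos i) Gi.
split.
- split => //.
  move=> i; have [uS HSi E] := HS i; exists (S i); split => //.
  by move=> q; rewrite E; apply: fact_mem.
- exact: PE.
- rewrite PE; split; apply: ler_prod => i _.
    by rewrite invr_ge0 ler0n /= low_le.
  by rewrite ltW ?fac_pos //= up_le //; case: (sumS i).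
- split; [exact: iff_trans lowE irrE | exact: codeE].
exact: iff_trans upE splitE.
Qed.
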